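(* Let $\mathcal{X}=({\bm X},m^{\bm X}_\bullet,\nu^{\bm X})$, $\mathcal{Y}=({\bm Y},m^{\bm Y}_\bullet,\nu^{\bm Y})$ be Markov chains on finite sets with $n=|{\bm X}|$, $m=|{\bm Y}|$, $C\in\mathbb{R}_+^{n\times m}$ a cost matrix, $\delta\in(0,1]$ and $\epsilon\ge0$. Then the limit $d^{\delta,(\infty)}_{\mathrm{WL},\epsilon}(\mathcal{X},\mathcal{Y};C):=\lim_{k\to\infty}d^{\delta,(k)}_{\mathrm{WL},\epsilon}(\mathcal{X},\mathcal{Y};C)$ exists, equals $d^\epsilon_{\mathrm W}(\nu^{\bm X},\nu^{\bm Y};C^{\epsilon,\delta,(\infty)})$, and for every $k\in\mathbb{N}$, $$\big|d^{\delta,(k)}_{\mathrm{WL},\epsilon}(\mathcal{X},\mathcal{Y};C)-d^{\delta,(\infty)}_{\mathrm{WL},\epsilon}(\mathcal{X},\mathcal{Y};C)\big|\le\frac{(1-\delta)^k}{\delta}\big(2\|C\|_\infty+\epsilon\log(nm)\big).$$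
   Context: For $\alpha\in\mathcal{P}({\bm X}),\beta\in\mathcal{P}({\bm Y})$, cost $D$ and $\epsilon\ge0$, $d^{\epsilon}_{\mathrm W}(\alpha,\beta;D)=\min_{P\in\mathcal{C}(\alpha,\beta)}\sum_{i,j}P_{ij}D_{ij}+\epsilon\sum_{i,j}P_{ij}\log P_{ij}$, with $\mathcal{C}(\alpha,\beta)$ the set of couplings. Define $C^{\epsilon,\delta,(0)}=C$, $C^{\epsilon,\delta,(l)}_{ij}=\delta C_{ij}+(1-\delta)d^\epsilon_{\mathrm W}(m^{\bm X}_i,m^{\bm Y}_j;C^{\epsilon,\delta,(l-1)})$, and $d^{\delta,(k)}_{\mathrm{WL},\epsilon}(\mathcal{X},\mathcal{Y};C)=d^\epsilon_{\mathrm W}(\nu^{\bm X},\nu^{\bm Y};C^{\epsilon,\delta,(k)})$ for $k\in\mathbb{N}$. $C^{\epsilon,\delta,(\infty)}$ denotes the unique fixed point of $D\mapsto\big(\delta C_{ij}+(1-\delta)d^\epsilon_{\mathrm W}(m^{\bm X}_i,m^{\bm Y}_j;D)\big)_{i,j}$ (equivalently $\lim_k C^{\epsilon,\delta,(k)}$). $\|\cdot\|_\infty$ is the entrywise max norm. *)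

(* Defs.v *)
From HB Require Import structures.
From mathcomp Require Import all_boot all_order all_algebra.
From mathcomp Require Import all_classical all_reals all_analysis.
Set Implicit Arguments. Unset Strict Implicit. Unset Printing Implicit Defensive.
Import Order.TTheory GRing.Theory Num.Theory numFieldNormedType.Exports.
Local Open Scope ring_scope.
Local Open Scope classical_set_scope.

Definition prob_vec {R : realType} {T : finType} (a : T -> R) : Prop :=
  (forall x, 0 <= a x) /\ \sum_(x : T) a x = 1.

Definition markov_kernel {R : realType} {T : finType} (mk : T -> T -> R) : Prop :=
  forall x, prob_vec (mk x).

Definition coupling {R : realType} {X Y : finType}
  (a : X -> R) (b : Y -> R) (P : X -> Y -> R) : Prop :=
  (forall x y, 0 <= P x y) /\
  (forall x, \sum_(y : Y) P x y = a x) /\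
  (forall y, \sum_(x : X) P x y = b y).

Definition xlogx {R : realType} (t : R) : R := if t == 0 then 0 else t * ln t.

Definition ot_obj {R : realType} {X Y : finType} (eps : R)
  (D P : X -> Y -> R) : R :=
  \sum_(x : X) \sum_(y : Y) (P x y * D x y + eps * xlogx (P x y)).

Definition dW {R : realType} {X Y : finType} (eps : R)
  (a : X -> R) (b : Y -> R) (D : X -> Y -> R) : R :=
  inf [set v | exists P, coupling a b P /\ v = ot_obj eps D P].

Definition WLmap {R : realType} {X Y : finType} (eps delta : R)
  (mX : X -> X -> R) (mY : Y -> Y -> R) (C D : X -> Y -> R) : X -> Y -> R :=
  fun i j => delta * C i j + (1 - delta) * dW eps (mX i) (mY j) D.

Definition Citer {R : realType} {X Y : finType} (eps delta : R)
  (mX : X -> X -> R) (mY : Y -> Y -> R) (C : X -> Y -> R) (k : nat) : X -> Y -> R :=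
  iter k (WLmap eps delta mX mY C) C.

Definition dWLk {R : realType} {X Y : finType} (eps delta : R)
  (mX : X -> X -> R) (nuX : X -> R) (mY : Y -> Y -> R) (nuY : Y -> R)
  (C : X -> Y -> R) (k : nat) : R :=
  dW eps nuX nuY (Citer eps delta mX mY C k).

Definition maxnorm {R : realType} {X Y : finType} (C : X -> Y -> R) : R :=
  \big[Num.max/0]_(p : X * Y) `|C p.1 p.2|.

(* Main.v *)
Require Import Defs.
From HB Require Import structures.
From mathcomp Require Import all_boot all_order all_algebra.
From mathcomp Require Import all_classical all_reals all_analysis.
From mathcomp Require Import ring lra.
Import Order.TTheory GRing.Theory Num.Theory numFieldNormedType.Exports.
Local Open Scope ring_scope.
Local Open Scope classical_set_scope.

Lemma ev_small (R : realType) (c K e : R) : 0 <= c -> c < 1 -> 0 < e ->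
  exists N, forall n, (N <= n)%N -> c ^+ n * K < e.
Proof.
move=> c0 c1 e0.
have [K0|K0] := leP K 0.
  by exists 0%N => n _; apply: le_lt_trans e0; rewrite mulr_ge0_le0 // exprn_ge0.
have hc : `|c| < 1 by rewrite ger0_norm.
have := @cvgr0_norm_lt _ _ _ _ _ _ (cvg_expr hc) _ (divr_gt0 e0 K0).
move=> [N _ HN]; exists N => n Nn; have := HN n Nn.
rewrite /= ger0_norm ?exprn_ge0 // => H.
by rewrite -ltr_pdivlMr.
Qed.

Lemma cauchy_seq (R : realType) (u : nat -> R) :
  (forall e, 0 < e -> exists N, forall n, (N <= n)%N -> `|u N - u n| < e) ->
  cvg (u @ \oo).
Proof.
move=> H; apply/cauchy_cvgP/cauchy_exP => e e0.
have [N HN] := H e e0; exists (u N); exists N => // n Nn.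
Qed.

Set Implicit Arguments. Unset Strict Implicit.
Section S.
Variable R : realType.

Lemma ln_le_sub1 (u : R) : 0 < u -> ln u <= u - 1.
Proof.
move=> u0; have := @le_ln1Dx R (u - 1); rewrite addrCA subrr addr0; apply.
lra.
Qed.

Lemma xlogx_ge (t N : R) : 0 <= t -> 0 < N -> t - N^-1 <= xlogx t + t * ln N.
Proof.
move=> t0 N0; rewrite /xlogx; case: eqP => [->|/eqP tn0].
  rewrite mul0r !add0r; have : 0 < N^-1 by rewrite invr_gt0.
  lra.
have tp : 0 < t by rewrite lt_neqAle eq_sym tn0.
rewrite -mulrDr -lnM ?posrE //.
have tN : 0 < t * N by rewrite mulr_gt0.
have := @ln_le_sub1 ((t * N)^-1); rewrite invr_gt0 => /(_ tN).
rewrite lnV ?posrE // => H.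
have : t * (- ln (t * N)) <= t * ((t * N)^-1 - 1) by rewrite ler_pM2l.
rewrite invfM mulrBr mulr1 mulrA mulfV ?mul1r //; lra.
Qed.

Lemma xlogx_le0 (t : R) : 0 <= t -> t <= 1 -> xlogx t <= 0.
Proof.
move=> t0 t1; rewrite /xlogx; case: eqP => // _.
by rewrite mulr_ge0_le0 // ln_le0.
Qed.

Variables (X Y : finType).
Implicit Types (a : X -> R) (b : Y -> R) (D P : X -> Y -> R).

Definition NN : R := #|X|%:R * #|Y|%:R.

Lemma coup_sum a b P : prob_vec a -> coupling a b P ->
  \sum_x \sum_y P x y = 1.
Proof.
move=> [_ a1] [_ [Pa _]]; rewrite -a1; apply: eq_bigr => x _; exact: Pa.
Qed.

Lemma coup_le1 a b P : prob_vec a -> coupling a b P -> forall x y, P x y <= 1.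
Proof.
move=> [a0 a1] [P0 [Pa _]] x y.
apply: (le_trans (y := a x)).
  rewrite -Pa (bigD1 y) //= lerDl; apply: sumr_ge0 => z _; exact: P0.
rewrite -a1 (bigD1 x) //= lerDl; apply: sumr_ge0 => z _; exact: a0.
Qed.

Lemma NN_gt0 a : prob_vec a -> (0 < #|X|)%N -> (0 < #|Y|)%N -> 0 < NN.
Proof. by move=> _ hx hy; rewrite /NN mulr_gt0 // ltr0n. Qed.

Lemma gibbs a b P : prob_vec a -> coupling a b P -> 0 < NN ->
  - ln NN <= \sum_x \sum_y xlogx (P x y).
Proof.
move=> pa cP N0.
have H : \sum_x \sum_y (P x y - NN^-1) <= \sum_x \sum_y (xlogx (P x y) + P x y * ln NN).
  apply: ler_sum => x _; apply: ler_sum => y _; apply: xlogx_ge => //.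
  by case: cP => P0 _; exact: P0.
have E1 : \sum_x \sum_y (P x y - NN^-1) = 1 - (NN^-1 *+ #|Y|) *+ #|X|.
  under eq_bigr => x _ do rewrite sumrB sumr_const.
  by rewrite sumrB sumr_const (coup_sum pa cP).
have E2 : \sum_x \sum_y (xlogx (P x y) + P x y * ln NN) =
   \sum_x \sum_y xlogx (P x y) + ln NN.
  rewrite -[X in _ + X]mul1r -(coup_sum pa cP) mulr_suml -big_split /=.
  apply: eq_bigr => x _; by rewrite mulr_suml -big_split.
have E3 : (NN^-1 *+ #|Y|) *+ #|X| = 1.
  by rewrite -mulrnA -mulr_natr /NN mulnC natrM mulrC divff // gt_eqF.
move: H; rewrite E1 E2 E3; lra.
Qed.


Variable eps : R.

Lemma obj_split D P : ot_obj eps D P =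
  \sum_x \sum_y P x y * D x y + eps * \sum_x \sum_y xlogx (P x y).
Proof.
rewrite /ot_obj mulr_sumr -big_split /=; apply: eq_bigr => x _.
by rewrite mulr_sumr -big_split.
Qed.

Lemma sum_PD_le a b P D M : prob_vec a -> coupling a b P ->
  (forall x y, D x y <= M) -> \sum_x \sum_y P x y * D x y <= M.
Proof.
move=> pa cP HM; rewrite -[X in _ <= X]mul1r -(coup_sum pa cP) mulr_suml.
apply: ler_sum => x _; rewrite mulr_suml; apply: ler_sum => y _.
by apply: ler_wpM2l => //; case: cP => P0 _; exact: P0.
Qed.

Lemma obj_lb a b P D M : prob_vec a -> coupling a b P -> 0 < NN -> 0 <= eps ->
  (forall x y, `|D x y| <= M) -> - M - eps * ln NN <= ot_obj eps D P.
Proof.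
move=> pa cP N0 e0 HM; rewrite obj_split.
have H1 : \sum_x \sum_y P x y * (- D x y) <= M.
  apply: (sum_PD_le pa cP) => x y; have := HM x y; rewrite ler_norml; lra.
have H2 : - ln NN <= \sum_x \sum_y xlogx (P x y) := gibbs pa cP N0.
have H3 : eps * (- ln NN) <= eps * \sum_x \sum_y xlogx (P x y) by rewrite ler_wpM2l.
have E : \sum_x \sum_y P x y * (- D x y) = - \sum_x \sum_y P x y * D x y.
  rewrite -sumrN; apply: eq_bigr => x _; rewrite -sumrN; apply: eq_bigr => y _.
  by rewrite mulrN.
move: H1 H3; rewrite E; lra.
Qed.

Lemma obj_ub a b P D M : prob_vec a -> coupling a b P -> 0 <= eps ->
  (forall x y, `|D x y| <= M) -> ot_obj eps D P <= M.
Proof.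
move=> pa cP e0 HM; rewrite obj_split.
have H1 : \sum_x \sum_y P x y * D x y <= M.
  apply: (sum_PD_le pa cP) => x y; have := HM x y; rewrite ler_norml; lra.
have H2 : \sum_x \sum_y xlogx (P x y) <= 0.
  apply: sumr_le0 => x _; apply: sumr_le0 => y _; apply: xlogx_le0.
    by case: cP => P0 _; exact: P0.
  exact: coup_le1 pa cP x y.
have H3 : eps * \sum_x \sum_y xlogx (P x y) <= 0 by rewrite mulr_ge0_le0.
lra.
Qed.

Lemma obj_diff a b P D D' e : prob_vec a -> coupling a b P ->
  (forall x y, D x y - D' x y <= e) -> ot_obj eps D P <= ot_obj eps D' P + e.
Proof.
move=> pa cP He; rewrite !obj_split.
have := sum_PD_le pa cP He.
have -> : \sum_x \sum_y P x y * (D x y - D' x y) =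
  \sum_x \sum_y P x y * D x y - \sum_x \sum_y P x y * D' x y.
  rewrite -sumrB; apply: eq_bigr => x _; rewrite -sumrB; apply: eq_bigr => y _.
  by rewrite mulrBr.
lra.
Qed.

Definition Sset a b D := [set v | exists P, coupling a b P /\ v = ot_obj eps D P].

Lemma prod_coup a b : prob_vec a -> prob_vec b -> coupling a b (fun x y => a x * b y).
Proof.
move=> [a0 a1] [b0 b1]; split; first by move=> x y; rewrite mulr_ge0.
split; first by move=> x; rewrite -mulr_sumr b1 mulr1.
by move=> y; rewrite -mulr_suml a1 mul1r.
Qed.

Lemma Sset_ne a b D : prob_vec a -> prob_vec b -> Sset a b D !=set0.
Proof. by move=> pa pb; exists (ot_obj eps D (fun x y => a x * b y)), (fun x y => a x * b y); split => //; exact: prod_coup. Qed.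

Lemma dW_le a b D P M : prob_vec a -> 0 < NN -> 0 <= eps ->
  (forall x y, `|D x y| <= M) -> coupling a b P -> dW eps a b D <= ot_obj eps D P.
Proof.
move=> pa N0 e0 HM cP; apply: (ge_inf (E := Sset a b D)).
  exists (- M - eps * ln NN) => v [Q [cQ ->]]; exact: (obj_lb pa cQ).
by exists P.
Qed.

Lemma dW_ge a b D L : prob_vec a -> prob_vec b ->
  (forall P, coupling a b P -> L <= ot_obj eps D P) -> L <= dW eps a b D.
Proof.
move=> pa pb H; apply: lb_le_inf; first exact: Sset_ne.
by move=> v [P [cP ->]]; exact: H.
Qed.

Lemma dW_bounds a b D M : prob_vec a -> prob_vec b -> 1 <= NN -> 0 <= eps ->
  (forall x y, `|D x y| <= M) -> `|dW eps a b D| <= M + eps * ln NN.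
Proof.
move=> pa pb N1 e0 HM; have N0 : 0 < NN by apply: lt_le_trans N1. rewrite ler_norml; apply/andP; split.
  rewrite opprD; apply: dW_ge => // P cP; exact: obj_lb pa cP N0 e0 HM.
have cP := prod_coup pa pb.
apply: (le_trans (dW_le pa N0 e0 HM cP)); apply: (le_trans (obj_ub pa cP e0 HM)).
by rewrite lerDl mulr_ge0 // ln_ge0.
Qed.

Lemma dW_lip a b D D' e : prob_vec a -> prob_vec b -> 0 < NN -> 0 <= eps ->
  (exists M, forall x y, `|D x y| <= M) ->
  (forall x y, D x y - D' x y <= e) -> dW eps a b D <= dW eps a b D' + e.
Proof.
move=> pa pb N0 e0 [M HM] He; rewrite -lerBlDr; apply: dW_ge => // P cP.
rewrite lerBlDr; apply: le_trans (obj_diff pa cP He).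
exact: dW_le pa N0 e0 HM cP.
Qed.

End S.

Lemma maxnorm_ge (R : realType) (X Y : finType) (C : X -> Y -> R) x y :
  `|C x y| <= maxnorm C.
Proof.
by rewrite /maxnorm (bigD1 (x, y)) //= le_max lexx.
Qed.

Lemma maxnorm_ge0 (R : realType) (X Y : finType) (C : X -> Y -> R) :
  0 <= maxnorm C.
Proof.
rewrite /maxnorm; apply: (big_ind (fun v => 0 <= v)) => //.
by move=> u v u0 v0; rewrite le_max u0.
Qed.

Lemma fin_bounded (R : realType) (X Y : finType) (D : X -> Y -> R) :
  exists M, forall x y, `|D x y| <= M.
Proof. by exists (maxnorm D) => x y; exact: maxnorm_ge. Qed.

Unset Implicit Arguments.
Section Main.
Variables (R : realType) (X Y : finType).
Variables (mX : X -> X -> R) (nuX : X -> R) (mY : Y -> Y -> R) (nuY : Y -> R).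
Variables (C : X -> Y -> R) (delta eps : R).
Hypotheses (hmX : markov_kernel mX) (hnuX : prob_vec nuX).
Hypotheses (hmY : markov_kernel mY) (hnuY : prob_vec nuY).
Hypotheses (d0 : 0 < delta) (d1 : delta <= 1) (e0 : 0 <= eps).
Hypothesis N1 : 1 <= @NN R X Y.

Let N0 : 0 < @NN R X Y. Proof. exact: lt_le_trans N1. Qed.

Local Notation WL := (WLmap eps delta mX mY C).
Local Notation c := (1 - delta).
Local Notation B0 := (2 * maxnorm C + eps * ln (@NN R X Y)).

Let c0 : 0 <= c. Proof. move: d1. lra. Qed.
Let c1 : c < 1. Proof. move: d0. lra. Qed.
Let B00 : 0 <= B0.
Proof.
by rewrite addr_ge0 ?mulr_ge0 ?maxnorm_ge0 // ln_ge0.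
Qed.

Lemma dW_abs_lip (a : X -> R) (b : Y -> R) (D D' : X -> Y -> R) e : prob_vec a -> prob_vec b ->
  (forall x y, `|D x y - D' x y| <= e) ->
  `|dW eps a b D - dW eps a b D'| <= e.
Proof.
move=> pa pb H; rewrite ler_norml; apply/andP; split.
  have : dW eps a b D' <= dW eps a b D + e.
    apply: dW_lip => //; first exact: fin_bounded.
    by move=> x y; have := H x y; rewrite distrC ler_norml => /andP[_].
  lra.
have : dW eps a b D <= dW eps a b D' + e.
  apply: dW_lip => //; first exact: fin_bounded.
  by move=> x y; have := H x y; rewrite ler_norml => /andP[_].
lra.
Qed.

Lemma WL_contr (D D' : X -> Y -> R) e : (forall x y, `|D x y - D' x y| <= e) ->
  forall i j, `|WL D i j - WL D' i j| <= c * e.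
Proof.
move=> H i j; rewrite /WLmap.
have -> : delta * C i j + (1 - delta) * dW eps (mX i) (mY j) D -
  (delta * C i j + (1 - delta) * dW eps (mX i) (mY j) D') =
  c * (dW eps (mX i) (mY j) D - dW eps (mX i) (mY j) D') by ring.
rewrite normrM ger0_norm // ler_wpM2l //; exact: dW_abs_lip.
Qed.

Lemma step1 i j : `|WL C i j - C i j| <= c * B0.
Proof.
rewrite /WLmap.
have -> : delta * C i j + (1 - delta) * dW eps (mX i) (mY j) C - C i j =
  c * (dW eps (mX i) (mY j) C - C i j) by ring.
rewrite normrM ger0_norm // ler_wpM2l //.
apply: (le_trans (ler_normB _ _)).
have := dW_bounds (eps := eps) (hmX i) (hmY j) N1 e0 (@maxnorm_ge R X Y C).
have := maxnorm_ge C i j; lra.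
Qed.

Local Notation u k := (Citer eps delta mX mY C k).
Local Notation T k := (c ^+ k / delta * B0).

Lemma step2 k i j : `|u k.+1 i j - u k i j| <= c ^+ k * B0.
Proof.
elim: k i j => [|k IH] i j.
  rewrite expr0 mul1r; apply: le_trans (step1 i j) _.
  by have := ler_wpM2r B00 (ltW c1); rewrite mul1r.
rewrite exprS -mulrA; exact: (WL_contr _ _ _ IH i j).
Qed.

Lemma step3 k n i j : `|u (k + n)%N i j - u k i j| <= c ^+ k * (1 - c ^+ n) * B0 / delta.
Proof.
elim: n i j => [|n IH] i j.
  by rewrite addn0 subrr normr0 expr0 subrr mulr0 !mul0r.
rewrite addnS; apply: le_trans (ler_distD (u (k + n)%N i j) _ _) _.
apply: le_trans (lerD (step2 (k + n) i j) (IH i j)) _.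
have dn0 : delta != 0 by rewrite gt_eqF.
rewrite exprD exprS le_eqVlt; apply/orP; left; apply/eqP; field.
by [].
Qed.

Lemma step3' k n i j : `|u (k + n)%N i j - u k i j| <= T k.
Proof.
apply: le_trans (step3 k n i j) _.
have dn0 : delta != 0 by rewrite gt_eqF.
have E : T k - c ^+ k * (1 - c ^+ n) * B0 / delta = c ^+ k * c ^+ n * (delta^-1 * B0).
  by field.
have P : 0 <= c ^+ k * c ^+ n * (delta^-1 * B0).
  apply: mulr_ge0; first by apply: mulr_ge0; apply: exprn_ge0.
  by apply: mulr_ge0 => //; rewrite invr_ge0 ltW.
by rewrite -subr_ge0 E.
Qed.

Lemma ucvg i j : cvg ((fun k => u k i j) @ \oo).
Proof.
apply: cauchy_seq => e he.
have [N HN] := @ev_small R c (delta^-1 * B0) e c0 c1 he.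
exists N => n Nn; rewrite -(subnKC Nn) distrC.
apply: le_lt_trans (step3' _ _ _ _) _; rewrite -mulrA; exact: HN.
Qed.

Definition Cinf : X -> Y -> R := fun i j => lim ((fun k => u k i j) @ \oo).

Lemma Cinf_cvg i j : (fun k => u k i j) @ \oo --> Cinf i j.
Proof. exact: ucvg i j. Qed.

Lemma step4 k i j : `|u k i j - Cinf i j| <= T k.
Proof.
apply/ler_addgt0Pr => e he.
have := Cinf_cvg i j; move/cvgrPdist_lt => /(_ e he) [N _ HN].
apply: le_trans (ler_distD (u (k + N)%N i j) _ _) _.
apply: lerD; first by rewrite distrC; exact: step3'.
rewrite distrC; apply: ltW; apply: HN => /=; exact: leq_addl.
Qed.

Lemma Cinf_fix : WL Cinf = Cinf.
Proof.
apply/funext => i; apply/funext => j; apply/eqP; rewrite -subr_eq0 -normr_le0.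
apply/ler_addgt0Pr => e he; rewrite add0r.
have [N HN] := @ev_small R c (2 * (delta^-1 * B0)) e c0 c1 he.
apply: le_trans (ler_distD (WL (u N) i j) _ _) _.
have H1 : `|WL Cinf i j - WL (u N) i j| <= c * T N.
  apply: WL_contr => x y; rewrite distrC; exact: step4.
have H2 : `|WL (u N) i j - Cinf i j| <= T N.+1 := step4 N.+1 i j.
have t0 : 0 <= T N.
  apply: mulr_ge0 => //; apply: mulr_ge0; [exact: exprn_ge0|by rewrite invr_ge0 ltW].
have E : T N.+1 = c * T N by rewrite exprS; ring.
have H3 : c * T N <= T N by have := ler_wpM2r t0 (ltW c1); rewrite mul1r.
have H4 : c ^+ N * (2 * (delta^-1 * B0)) = 2 * T N by ring.
have := HN N (leqnn N); rewrite H4 => H5.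
move: H1 H2 H3 H5; rewrite E; lra.
Qed.

Lemma Cinf_uniq D : WL D = D -> D = Cinf.
Proof.
move=> HD; have [M HM] := fin_bounded (fun x y => D x y - Cinf x y).
have H : forall k i j, `|D i j - Cinf i j| <= c ^+ k * M.
  elim=> [|k IH] i j; first by rewrite expr0 mul1r; exact: HM.
  rewrite -HD -Cinf_fix exprS -mulrA; exact: WL_contr IH i j.
apply/funext => i; apply/funext => j; apply/eqP; rewrite -subr_eq0 -normr_le0.
apply/ler_addgt0Pr => e he; rewrite add0r.
have [N HN] := @ev_small R c M e c0 c1 he.
exact: ltW (le_lt_trans (H N i j) (HN N (leqnn N))).
Qed.

Lemma final_bound k :
  `|dWLk eps delta mX nuX mY nuY C k - dW eps nuX nuY Cinf| <= T k.
Proof. exact: dW_abs_lip hnuX hnuY (step4 k). Qed.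

Lemma final_cvg :
  dWLk eps delta mX nuX mY nuY C k @[k --> \oo] --> dW eps nuX nuY Cinf.
Proof.
apply/cvgrPdist_le => e he.
have [N HN] := @ev_small R c (delta^-1 * B0) e c0 c1 he.
exists N => // n Nn; rewrite distrC; apply: le_trans (final_bound n) _.
rewrite -mulrA; exact: ltW (HN n Nn).
Qed.

End Main.

Lemma card_pos (R : realType) (X : finType) (a : X -> R) : prob_vec a -> (0 < #|X|)%N.
Proof.
move=> [_ a1]; case: (pickP (fun _ : X => true)) => [x _|H].
  by rewrite lt0n; apply/eqP => /card0_eq/(_ x); rewrite !inE.
by move: a1; rewrite big_pred0 // => /eqP; rewrite eq_sym oner_eq0.
Qed.

Theorem proposition38 (R : realType) (X Y : finType)
  (mX : X -> X -> R) (nuX : X -> R) (mY : Y -> Y -> R) (nuY : Y -> R)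
  (C : X -> Y -> R) (delta eps : R) :
  markov_kernel mX -> prob_vec nuX ->
  markov_kernel mY -> prob_vec nuY ->
  (forall i j, 0 <= C i j) ->
  0 < delta -> delta <= 1 -> 0 <= eps ->
  exists Cinf : X -> Y -> R,
    WLmap eps delta mX mY C Cinf = Cinf /\
    (forall D, WLmap eps delta mX mY C D = D -> D = Cinf) /\
    (dWLk eps delta mX nuX mY nuY C k @[k --> \oo] --> dW eps nuX nuY Cinf) /\
    (forall k : nat,
      `|dWLk eps delta mX nuX mY nuY C k - dW eps nuX nuY Cinf|
        <= (1 - delta) ^+ k / delta
           * (2 * maxnorm C + eps * ln (#|X|%:R * #|Y|%:R))).
Proof.
move=> hmX hnuX hmY hnuY _ d0 d1 e0.
have N1 : 1 <= @NN R X Y.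
  rewrite /NN -natrM ler1n muln_gt0 (card_pos _ _ _ hnuX) (card_pos _ _ _ hnuY) //.
exists (Cinf R X Y mX mY C delta eps); split; first by apply: Cinf_fix.
split; first by move=> D HD; apply: Cinf_uniq.
split; first by apply: final_cvg.
by move=> k; apply: final_bound.
Qed.
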